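(* (Intuitionistic logic.) If every subset of $\mathbb{N}$ is countable and Markov's principle holds, then the law of excluded middle holds.
   Context: A set $X$ is countable if there is a surjection $\mathbb{N} \to X+1$. Markov's principle: for every $f : \mathbb{N} \to \{0,1\}$, $\neg\neg(\exists n \in \mathbb{N}.\, f(n)=1)$ implies $\exists n\in\mathbb{N}.\, f(n) = 1$. The setting is intuitionistic higher-order logic (e.g. the internal language of a topos), where ''every subset of $\mathbb{N}$'' quantifies over the power object of $\mathbb{N}$. *)

(* Defs.v *)
(* Subsets of N are predicates nat -> Prop
   (the power object of N), and a subset A is viewed as the type {n | A n}. *)

Definition countable (X : Type) : Prop :=
  exists f : nat -> X + unit, forall y : X + unit, exists n : nat, f n = y.

Definition subset_type (A : nat -> Prop) : Type := { n : nat | A n }.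

Definition markov_principle : Prop :=
  forall f : nat -> bool,
    ~ ~ (exists n : nat, f n = true) -> exists n : nat, f n = true.

Definition LEM : Prop := forall P : Prop, P \/ ~ P.

(* Main.v *)
Require Import Defs.

Lemma stable_of (Hc : forall A : nat -> Prop, countable (subset_type A))
  (Hm : markov_principle) (Q : Prop) : ~ ~ Q -> Q.
Proof.
  intros nnq.
  destruct (Hc (fun _ => Q)) as [f Hf].
  set (g := fun n => match f n with inl _ => true | inr _ => false end).
  assert (E : exists n, g n = true).
  { apply Hm. intros H. apply nnq. intros q.
    destruct (Hf (inl (exist _ 0 q))) as [n Hn].
    apply H. exists n. unfold g. rewrite Hn. reflexivity. }
  destruct E as [n Hn]. unfold g in Hn.
  destruct (f n) as [[m q]|u]; [exact q | discriminate].
Qed.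

Theorem proposition2p6 :
  (forall A : nat -> Prop, countable (subset_type A)) ->
  markov_principle ->
  LEM.
Proof.
  intros Hc Hm P. apply (stable_of Hc Hm).
  intros H. apply H. right. intros p. apply H. left. exact p.
Qed.
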